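(* Let $M,N$ be $\lambda$-terms. (1) $M\simeq_\beta N$ iff $M^n\simeq_v N^n$ iff $M^n\simeq_b N^n$. (2) $M$ is $\beta$-normal iff $M^n$ is $v$-normal iff $M^n$ is $b$-normal; and $M$ is $w\beta$-normal iff $M^n$ is $wv$-normal iff $M^n$ is $wb$-normal.
   Context: Bang calculus. The set $!\Lambda$ of terms is $T,S,R ::= x \mid \lambda x.T \mid T\,S \mid \mathrm{der}\,T \mid\ !T$; $\lambda$ the only binder, up to $\alpha$-conversion, $T\{S/x\}$ capture-avoiding substitution. Contexts: $C ::= [\cdot] \mid \lambda x.C \mid C\,T \mid T\,C \mid \mathrm{der}\,C \mid\ !C$; ground contexts: $W ::= [\cdot] \mid \lambda x.W \mid W\,T \mid T\,W \mid \mathrm{der}\,W$. Root steps: $(\lambda x.T)(!S)\mapsto_v T\{S/x\}$, $\mathrm{der}(!T)\mapsto_d T$, $\mapsto_b\,=\,\mapsto_v\cup\mapsto_d$. For $r\in\{v,d,b\}$, $\to_r$ is the closure of $\mapsto_r$ under contexts and $\to_{wr}$ its closure under ground contexts. $\lambda$-calculus: $M,N ::= x\mid\lambda x.M\mid MN$; $\to_\beta$ is the closure of $(\lambda x.M)N\mapsto_\beta M\{N/x\}$ under all $\lambda$-contexts $C ::= [\cdot]\mid \lambda x.C\mid C\,M\mid M\,C$, and $\to_{w\beta}$ its closure under CbN ground contexts $N ::= [\cdot]\mid\lambda x.N\mid N\,M$. CbN translation: $x^n=x$, $(\lambda x.M)^n=\lambda x.M^n$, $(MN)^n=M^n\,(!N^n)$.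 For a relation $\to_r$: $\simeq_r$ is its reflexive-symmetric-transitive closure; a term is $r$-normal if it has no $\to_r$-successor. *)

(* Defs.v *)
(* Terms are represented with de Bruijn indices, so that
   alpha-conversion is built in; substitution is capture-avoiding
   parallel substitution (sigma-calculus style). *)
From Stdlib Require Import Relations.

Inductive lterm : Type :=
| lvar : nat -> lterm
| llam : lterm -> lterm
| lapp : lterm -> lterm -> lterm.

Definition upren (xi : nat -> nat) : nat -> nat :=
  fun n => match n with 0 => 0 | S m => S (xi m) end.

Fixpoint lren (xi : nat -> nat) (M : lterm) : lterm :=
  match M with
  | lvar n => lvar (xi n)
  | llam M => llam (lren (upren xi) M)
  | lapp M N => lapp (lren xi M) (lren xi N)
  end.

Definition lup (s : nat -> lterm) : nat -> lterm :=
  fun n => match n with 0 => lvar 0 | S m => lren S (s m) end.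

Fixpoint lsubst (s : nat -> lterm) (M : lterm) : lterm :=
  match M with
  | lvar n => s n
  | llam M => llam (lsubst (lup s) M)
  | lapp M N => lapp (lsubst s M) (lsubst s N)
  end.

(* M{N/x}, x being the variable bound by the outer lambda (index 0) *)
Definition lsubst1 (N : lterm) (M : lterm) : lterm :=
  lsubst (fun n => match n with 0 => N | S m => lvar m end) M.

Inductive beta : lterm -> lterm -> Prop :=
| beta_root M N : beta (lapp (llam M) N) (lsubst1 N M)
| beta_lam M M' : beta M M' -> beta (llam M) (llam M')
| beta_appl M M' N : beta M M' -> beta (lapp M N) (lapp M' N)
| beta_appr M N N' : beta N N' -> beta (lapp M N) (lapp M N').

Inductive wbeta : lterm -> lterm -> Prop :=
| wbeta_root M N : wbeta (lapp (llam M) N) (lsubst1 N M)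
| wbeta_lam M M' : wbeta M M' -> wbeta (llam M) (llam M')
| wbeta_appl M M' N : wbeta M M' -> wbeta (lapp M N) (lapp M' N).

Inductive bterm : Type :=
| bvar : nat -> bterm
| blam : bterm -> bterm
| bapp : bterm -> bterm -> bterm
| bder : bterm -> bterm
| bbang : bterm -> bterm.

Fixpoint bren (xi : nat -> nat) (T : bterm) : bterm :=
  match T with
  | bvar n => bvar (xi n)
  | blam T => blam (bren (upren xi) T)
  | bapp T Q => bapp (bren xi T) (bren xi Q)
  | bder T => bder (bren xi T)
  | bbang T => bbang (bren xi T)
  end.

Definition bup (s : nat -> bterm) : nat -> bterm :=
  fun n => match n with 0 => bvar 0 | S m => bren S (s m) end.

Fixpoint bsubst (s : nat -> bterm) (T : bterm) : bterm :=
  match T with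
  | bvar n => s n
  | blam T => blam (bsubst (bup s) T)
  | bapp T Q => bapp (bsubst s T) (bsubst s Q)
  | bder T => bder (bsubst s T)
  | bbang T => bbang (bsubst s T)
  end.

Definition bsubst1 (Q : bterm) (T : bterm) : bterm :=
  bsubst (fun n => match n with 0 => Q | S m => bvar m end) T.

Inductive root_v : bterm -> bterm -> Prop :=
| root_v_intro T Q : root_v (bapp (blam T) (bbang Q)) (bsubst1 Q T).
Inductive root_d : bterm -> bterm -> Prop :=
| root_d_intro T : root_d (bder (bbang T)) T.
Definition root_b (T T' : bterm) : Prop := root_v T T' \/ root_d T T'.

Inductive bstep (r : bterm -> bterm -> Prop) : bterm -> bterm -> Prop :=
| bstep_root T T' : r T T' -> bstep r T T'
| bstep_lam T T' : bstep r T T' -> bstep r (blam T) (blam T')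
| bstep_appl T T' Q : bstep r T T' -> bstep r (bapp T Q) (bapp T' Q)
| bstep_appr T Q R2 : bstep r Q R2 -> bstep r (bapp T Q) (bapp T R2)
| bstep_der T T' : bstep r T T' -> bstep r (bder T) (bder T')
| bstep_bang T T' : bstep r T T' -> bstep r (bbang T) (bbang T').

Inductive bwstep (r : bterm -> bterm -> Prop) : bterm -> bterm -> Prop :=
| bwstep_root T T' : r T T' -> bwstep r T T'
| bwstep_lam T T' : bwstep r T T' -> bwstep r (blam T) (blam T')
| bwstep_appl T T' Q : bwstep r T T' -> bwstep r (bapp T Q) (bapp T' Q)
| bwstep_appr T Q R2 : bwstep r Q R2 -> bwstep r (bapp T Q) (bapp T R2)
| bwstep_der T T' : bwstep r T T' -> bwstep r (bder T) (bder T').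

Definition step_v := bstep root_v.
Definition step_d := bstep root_d.
Definition step_b := bstep root_b.
Definition step_wv := bwstep root_v.
Definition step_wb := bwstep root_b.

Definition conv {A : Type} (R : relation A) : relation A := clos_refl_sym_trans A R.
Definition normal {A : Type} (R : relation A) (t : A) : Prop := forall t', ~ R t t'.

Fixpoint cbn (M : lterm) : bterm :=
  match M with
  | lvar n => bvar n
  | llam M => blam (cbn M)
  | lapp M N => bapp (cbn M) (bbang (cbn N))
  end.

(* Main.v *)
Require Import Defs.
From Stdlib Require Import Relations.

Lemma cbn_ren M : forall xi, cbn (lren xi M) = bren xi (cbn M).
Proof. induction M; intros; simpl; congruence. Qed.

Lemma cbn_subst M : forall s s', (forall n, s' n = cbn (s n)) ->
  cbn (lsubst s M) = bsubst s' (cbn M).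
Proof.
  induction M; intros s s' H; simpl.
  - symmetry; apply H.
  - f_equal; apply IHM. intros [|n]; simpl; [reflexivity|].
    rewrite H, cbn_ren; reflexivity.
  - rewrite (IHM1 s s' H), (IHM2 s s' H); reflexivity.
Qed.

Lemma cbn_subst1 N M : cbn (lsubst1 N M) = bsubst1 (cbn N) (cbn M).
Proof. unfold lsubst1, bsubst1; apply cbn_subst; intros [|n]; reflexivity. Qed.

Fixpoint fg (T : bterm) : lterm :=
  match T with
  | bvar n => lvar n
  | blam T => llam (fg T)
  | bapp T Q => lapp (fg T) (fg Q)
  | bder T => fg T
  | bbang T => fg T
  end.

Lemma fg_cbn M : fg (cbn M) = M.
Proof. induction M; simpl; congruence. Qed.

Lemma fg_ren T : forall xi, fg (bren xi T) = lren xi (fg T).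
Proof. induction T; intros; simpl; congruence. Qed.

Lemma fg_subst T : forall s s', (forall n, s' n = fg (s n)) ->
  fg (bsubst s T) = lsubst s' (fg T).
Proof.
  induction T; intros s s' H; simpl; try (erewrite ?IHT1, ?IHT2, ?IHT by eauto; reflexivity).
  - symmetry; apply H.
  - f_equal; apply IHT. intros [|n]; simpl; [reflexivity|].
    rewrite H, fg_ren; reflexivity.
Qed.

Lemma fg_subst1 Q T : fg (bsubst1 Q T) = lsubst1 (fg Q) (fg T).
Proof. unfold lsubst1, bsubst1; apply fg_subst; intros [|n]; reflexivity. Qed.

Lemma conv_lam M N : conv beta M N -> conv beta (llam M) (llam N).
Proof. induction 1; [apply rst_step; constructor; auto|apply rst_refl|apply rst_sym; auto|eapply rst_trans; eauto]. Qed.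
Lemma conv_appl M N P : conv beta M N -> conv beta (lapp M P) (lapp N P).
Proof. induction 1; [apply rst_step; constructor; auto|apply rst_refl|apply rst_sym; auto|eapply rst_trans; eauto]. Qed.
Lemma conv_appr M N P : conv beta M N -> conv beta (lapp P M) (lapp P N).
Proof. induction 1; [apply rst_step; constructor; auto|apply rst_refl|apply rst_sym; auto|eapply rst_trans; eauto]. Qed.

Lemma fg_step T T' : step_b T T' -> conv beta (fg T) (fg T').
Proof.
  induction 1; simpl; auto using conv_lam, conv_appl, conv_appr.
  destruct H as [H|H]; inversion H; subst; simpl.
  - rewrite fg_subst1; apply rst_step; constructor.
  - apply rst_refl.
Qed.

Lemma fg_conv T T' : conv step_b T T' -> conv beta (fg T) (fg T').
Proof. induction 1; [apply fg_step; auto|apply rst_refl|apply rst_sym; auto|eapply rst_trans; eauto]. Qed.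

Lemma cbn_beta M M' : beta M M' -> step_v (cbn M) (cbn M').
Proof.
  induction 1; simpl; try (constructor; auto; fail).
  - rewrite cbn_subst1; constructor; constructor.
  - apply bstep_appr, bstep_bang; auto.
Qed.

Lemma cbn_wbeta M M' : wbeta M M' -> step_wv (cbn M) (cbn M').
Proof.
  induction 1; simpl; try (constructor; auto; fail).
  rewrite cbn_subst1; constructor; constructor.
Qed.

Lemma step_b_back M : forall T', step_b (cbn M) T' -> exists M', beta M M'.
Proof.
  induction M; intros T' H; simpl in H; inversion H; subst.
  - destruct H0 as [H0|H0]; inversion H0.
  - destruct H0 as [H0|H0]; inversion H0.
  - destruct (IHM _ H1) as [M' HM]; eauto using beta.
  - destruct H0 as [H0|H0]; inversion H0; subst.
    destruct M1; simpl in *; try discriminate. eexists; apply beta_root.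
  - destruct (IHM1 _ H3) as [M' HM]; eauto using beta.
  - inversion H3; subst.
    + destruct H0 as [H0|H0]; inversion H0.
    + destruct (IHM2 _ H1) as [M' HM]; eauto using beta.
Qed.

Lemma step_wb_back M : forall T', step_wb (cbn M) T' -> exists M', wbeta M M'.
Proof.
  induction M; intros T' H; simpl in H; inversion H; subst.
  - destruct H0 as [H0|H0]; inversion H0.
  - destruct H0 as [H0|H0]; inversion H0.
  - destruct (IHM _ H1) as [M' HM]; eauto using wbeta.
  - destruct H0 as [H0|H0]; inversion H0; subst.
    destruct M1; simpl in *; try discriminate. eexists; apply wbeta_root.
  - destruct (IHM1 _ H3) as [M' HM]; eauto using wbeta.
  - inversion H3; subst. destruct H0 as [H0|H0]; inversion H0.
Qed.

Lemma v_sub_b T T' : step_v T T' -> step_b T T'.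
Proof. induction 1; try (constructor; auto; fail). apply bstep_root; left; auto. Qed.
Lemma wv_sub_wb T T' : step_wv T T' -> step_wb T T'.
Proof. induction 1; try (constructor; auto; fail). apply bwstep_root; left; auto. Qed.

Lemma vb_conv T T' : conv step_v T T' -> conv step_b T T'.
Proof. induction 1; [apply rst_step; apply v_sub_b; auto|apply rst_refl|apply rst_sym; auto|eapply rst_trans; eauto]. Qed.

Theorem mainTheorem8 (M N : lterm) :
  ((conv beta M N <-> conv step_v (cbn M) (cbn N)) /\
   (conv step_v (cbn M) (cbn N) <-> conv step_b (cbn M) (cbn N))) /\
  ((normal beta M <-> normal step_v (cbn M)) /\
   (normal step_v (cbn M) <-> normal step_b (cbn M)) /\
   (normal wbeta M <-> normal step_wv (cbn M)) /\
   (normal step_wv (cbn M) <-> normal step_wb (cbn M))).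
Proof.
  assert (A : conv beta M N -> conv step_v (cbn M) (cbn N)).
  { induction 1; [apply rst_step; apply cbn_beta; auto|apply rst_refl|apply rst_sym; auto|eapply rst_trans; eauto]. }
  assert (B : conv step_v (cbn M) (cbn N) -> conv step_b (cbn M) (cbn N)).
  { apply vb_conv. }
  assert (C : conv step_b (cbn M) (cbn N) -> conv beta M N).
  { intro H. rewrite <- (fg_cbn M), <- (fg_cbn N). apply fg_conv; auto. }
  split; [split; split; auto|].
  unfold normal; repeat split; intros H t' Ht.
  - destruct (step_b_back M t' (v_sub_b _ _ Ht)) as [M' HM]; eapply H; eauto.
  - eapply H; apply cbn_beta; eauto.
  - destruct (step_b_back M t' Ht) as [M' HM].
    eapply H; apply cbn_beta; eauto.
  - eapply H; apply v_sub_b; eauto.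
  - destruct (step_wb_back M t' (wv_sub_wb _ _ Ht)) as [M' HM]; eapply H; eauto.
  - eapply H; apply cbn_wbeta; eauto.
  - destruct (step_wb_back M t' Ht) as [M' HM].
    eapply H; apply cbn_wbeta; eauto.
  - eapply H; apply wv_sub_wb; eauto.
Qed.
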